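(* Let $k\ge1$ and $\varepsilon>0$. Suppose $\mathcal{A}$ is a quantum algorithm making $T$ queries to an unknown $n$-qubit unitary (and/or its inverse) which is a $(k,\sqrt{\varepsilon/2})$-quantum junta tester, i.e. for every $U\in\mathcal{U}_N$ it outputs, with probability at least $9/10$, ''Yes'' if $U$ is a quantum $k$-junta and ''No'' if $U$ is $\sqrt{\varepsilon/2}$-far from every quantum $k$-junta. Then $\mathcal{A}$, run with the oracle $U_f=\mathrm{diag}\big((-1)^{f(x)}\big)_{x\in\{0,1\}^n}$, is a $T$-query $(k,\varepsilon)$-classical junta tester: for every Boolean function $f:\{0,1\}^n\to\{0,1\}$ it outputs, with probability at least $9/10$, ''Yes'' if $f$ is a $k$-junta and ''No'' if $f$ is $\varepsilon$-far from every $k$-junta.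
   Context: $N=2^n$, $\mathcal{U}_N$ is the set of $N\times N$ unitaries. A unitary $U\in\mathcal{U}_N$ is a quantum $k$-junta if $U=V_S\otimes I_{\overline{S}}$ for some $S\subseteq[n]$ with $|S|=k$ and some $V_S\in\mathcal{U}_{2^k}$ acting on the qubits in $S$. For $A,B\in\mathbb{C}^{N\times N}$, $\mathrm{dist}(A,B):=\min_{\theta\in[0,2\pi)}\frac{1}{\sqrt{2N}}\|e^{i\theta}A-B\|$ with $\|\cdot\|$ the Frobenius norm; $U$ is $\delta$-far from every quantum $k$-junta if $\mathrm{dist}(U,V)\ge\delta$ for all quantum $k$-juntas $V$. A Boolean function $f:\{0,1\}^n\to\{0,1\}$ is a $k$-junta if $f(x)=g(x_{i_1},\dots,x_{i_k})$ for some $g:\{0,1\}^k\to\{0,1\}$ and fixed indices $i_1,\dots,i_k$; for Boolean functions $\mathrm{dist}(f,g):=\Pr_{x}[f(x)\neq g(x)]$ with $x$ uniform on $\{0,1\}^n$, and $f$ is $\varepsilon$-far from every $k$-junta if $\mathrm{dist}(f,g)\ge\varepsilon$ for every $k$-junta $g$. $U_f$ is the diagonal $N\times N$ matrix with diagonal entries $(-1)^{f(x)}$. *)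

(* Defs.v *)
From HB Require Import structures.
From mathcomp Require Import all_boot all_order all_algebra.
From mathcomp Require Import spectral sesquilinear.
From mathcomp Require Import reals.
From mathcomp Require Import trigo.
From mathcomp Require Import complex mxtens.

Set Implicit Arguments.
Unset Strict Implicit.
Unset Printing Implicit Defensive.

Import Order.TTheory GRing.Theory Num.Theory.
Local Open Scope ring_scope.
Local Open Scope complex_scope.
Local Open Scope sesquilinear_scope.

Section QJunta.
Variable R : realType.
Local Notation C := R[i].

(* Computational basis of n qubits: the basis vector with index x : 'I_(2^n)
   is |x_0 x_1 ... x_{n-1}>, where qubit j carries bit j of x (binary expansion). *)
Definition bit (x j : nat) : bool := odd (x %/ 2 ^ j).

Lemma pow2_gt0 (k : nat) : (0 < 2 ^ k)%N.
Proof. by rewrite expn_gt0. Qed.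

(* Restriction of the basis index x to the qubits in S (in increasing order),
   read as an index of the 2^|S|-dimensional space of the qubits in S.
   (The value is already < 2^|S|, the modulo only provides the ordinal bound.) *)
Definition restr_nat (n : nat) (S : {set 'I_n}) (x : nat) : nat :=
  \sum_(i < #|S|) (bit x (nth 0%N [seq val j | j <- enum S] i)) * 2 ^ i.

Definition restr (n : nat) (S : {set 'I_n}) (x : nat) : 'I_(2 ^ #|S|) :=
  Ordinal (ltn_pmod (restr_nat S x) (pow2_gt0 #|S|)).

(* V_S (x) I_{\bar S}: the operator acting as V on the qubits in S and as the
   identity on the other qubits. *)
Definition tens_on (n : nat) (S : {set 'I_n}) (V : 'M[C]_(2 ^ #|S|)) : 'M[C]_(2 ^ n) :=
  \matrix_(x, y)
    (if [forall j : 'I_n, (j \notin S) ==> (bit x j == bit y j)]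
     then V (restr S x) (restr S y) else 0).

Definition qjunta (n k : nat) (U : 'M[C]_(2 ^ n)) : Prop :=
  exists (S : {set 'I_n}) (V : 'M[C]_(2 ^ #|S|)),
    #|S| = k /\ V \is unitarymx /\ U = tens_on V.

Definition frob (m : nat) (A : 'M[C]_m) : R :=
  Num.sqrt (\sum_(i < m) \sum_(j < m) Normc.normc (A i j) ^+ 2).

Definition expi (t : R) : C := cos t +i* sin t.

(* dist(A,B) >= d, where dist(A,B) = min_{theta in [0,2pi)} ||e^{i theta}A - B|| / sqrt(2N). *)
Definition dist_ge (N : nat) (A B : 'M[C]_N) (d : R) : Prop :=
  forall t : R, 0 <= t -> t < 2 * pi ->
    d <= (Num.sqrt (2 * N%:R))^-1 * frob (expi t *: A - B).

Definition qfar (n k : nat) (U : 'M[C]_(2 ^ n)) (d : R) : Prop :=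
  forall V : 'M[C]_(2 ^ n), qjunta k V -> dist_ge U V d.

(* Boolean functions on {0,1}^n, the input x being the index x : 'I_(2^n)
   with bits x_j = bit x j. *)
Definition cjunta (n k : nat) (f : 'I_(2 ^ n) -> bool) : Prop :=
  exists (idx : 'I_k -> 'I_n) (g : {ffun 'I_k -> bool} -> bool),
    forall x : 'I_(2 ^ n), f x = g [ffun m => bit x (idx m)].

Definition cdist (n : nat) (f g : 'I_(2 ^ n) -> bool) : R :=
  #|[set x : 'I_(2 ^ n) | f x != g x]|%:R / (2 ^ n)%:R.

Definition cfar (n k : nat) (f : 'I_(2 ^ n) -> bool) (e : R) : Prop :=
  forall g : 'I_(2 ^ n) -> bool, cjunta k g -> e <= cdist f g.

Definition Uf (n : nat) (f : 'I_(2 ^ n) -> bool) : 'M[C]_(2 ^ n) :=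
  diag_mx (\row_x (- 1) ^+ f x).

(* A T-query quantum algorithm on n system qubits plus a ancilla qubits:
   unitaries G 0, ..., G T interleaved with T queries; query number t
   (t = 0..T-1) applies U (x) I, or U^{-1} (x) I = U^* (x) I when inv t = true.
   Start in |0...0>, end with a measurement in the computational basis,
   answering "Yes" iff the outcome lies in acc. *)
Record qalg (n T : nat) := QAlg {
  anc : nat;
  gate : nat -> 'M[C]_(2 ^ n * 2 ^ anc);
  inv : nat -> bool;
  acc : {set 'I_(2 ^ n * 2 ^ anc)}
}.

Definition qalg_wf (n T : nat) (A : qalg n T) : Prop :=
  forall t, (t <= T)%N -> gate A t \is unitarymx.

Definition oracle (n : nat) (b : bool) (U : 'M[C]_(2 ^ n)) : 'M[C]_(2 ^ n) :=
  if b then U ^t* else U.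

Fixpoint qstate (n T : nat) (A : qalg n T) (U : 'M[C]_(2 ^ n)) (t : nat)
  : 'cV[C]_(2 ^ n * 2 ^ anc A) :=
  match t with
  | 0 => gate A 0 *m \col_i (nat_of_ord i == 0%N)%:R
  | t'.+1 => gate A t *m ((oracle (inv A t') U *t (1%:M : 'M[C]_(2 ^ anc A)))
                          *m qstate A U t')
  end.

Definition pyes (n T : nat) (A : qalg n T) (U : 'M[C]_(2 ^ n)) : R :=
  \sum_(i in acc A) Normc.normc (qstate A U T i 0) ^+ 2.

Definition qtester (n T k : nat) (A : qalg n T) (d : R) : Prop :=
  forall U : 'M[C]_(2 ^ n), U \is unitarymx ->
    (qjunta k U -> 9 / 10 <= pyes A U) /\
    (qfar k U d -> 9 / 10 <= 1 - pyes A U).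

Definition ctester (n T k : nat) (A : qalg n T) (e : R) : Prop :=
  forall f : 'I_(2 ^ n) -> bool,
    (cjunta k f -> 9 / 10 <= pyes A (Uf f)) /\
    (cfar k f e -> 9 / 10 <= 1 - pyes A (Uf f)).

End QJunta.

(* Main.v *)
Require Import Defs.
From HB Require Import structures.
From mathcomp Require Import all_boot all_order all_algebra.
From mathcomp Require Import spectral sesquilinear reals trigo complex mxtens.
From mathcomp Require Import zify ring lra.
Import Order.TTheory GRing.Theory Num.Theory.

Lemma binsum_lt (b : nat -> bool) s : \sum_(i < s) b i * 2 ^ i < 2 ^ s.
Proof.
elim: s b => [|s IH] b; first by rewrite big_ord0.
rewrite big_ord_recl /= expn0 muln1.
under eq_bigr => i _ do rewrite /bump /= add1n expnS mulnCA.
rewrite -big_distrr /= expnS.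
have := IH (fun i => b i.+1) => /=; case: (b 0) => /=; lia.
Qed.

Lemma binsum_bit (b : nat -> bool) s i0 : i0 < s -> bit (\sum_(i < s) b i * 2 ^ i) i0 = b i0.
Proof.
elim: s b i0 => [|s IH] b i0 //.
rewrite big_ord_recl /= expn0 muln1.
under eq_bigr => i _ do rewrite /bump /= add1n expnS mulnCA.
rewrite -big_distrr /=.
set X := \sum_(i < s) _.
case: i0 => [|i0] Hi.
  by rewrite /bit expn0 divn1 oddD oddM /=; case: (b 0).
rewrite /bit expnS mulnC divnMA. rewrite -/(bit _ i0).
have -> : (b 0 + X * 2) %/ 2 = X.
  by case: (b 0) => /=; lia.
exact: (IH (fun i => b i.+1)).
Qed.

Lemma bits_inj n x y : x < 2 ^ n -> y < 2 ^ n ->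
  (forall j, j < n -> bit x j = bit y j) -> x = y.
Proof.
elim: n x y => [|n IH] x y.
  by rewrite expn0; case: x => //; case: y.
move=> Hx Hy H.
have H0 := H 0 isT; rewrite /bit expn0 !divn1 in H0.
have Hd : x %/ 2 = y %/ 2.
  apply: IH; first by rewrite ltn_divLR // -expnSr.
    by rewrite ltn_divLR // -expnSr.
  move=> j Hj; have := H j.+1 Hj; by rewrite /bit expnS !divnMA.
by rewrite (divn_eq x 2) (divn_eq y 2) Hd !modn2 H0.
Qed.
Lemma extend_set (T : finType) (A : {set T}) m : #|A| <= m -> m <= #|T| ->
  exists B : {set T}, A \subset B /\ #|B| = m.
Proof.
elim: m => [|m IH] HA HT.
  by exists A; split => //; apply/eqP; rewrite -leqn0.
case: (ltngtP #|A| m.+1) => [H||H]; last by exists A.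
  2: by rewrite ltnNge HA.
have [B [AB HB]] := IH H (ltnW HT).
have : B != setT.
  apply/eqP => EB; move: HT; by rewrite -cardsT -EB HB ltnn.
rewrite -properT => /properP [_ [x _ Hx]].
exists (x |: B); split; first by apply: subset_trans AB (subsetUr _ _).
by rewrite cardsU1 Hx HB.
Qed.

Local Open Scope ring_scope.

Lemma diag_unitary (R : realType) m (d : 'I_m -> bool) :
  diag_mx (\row_x (- 1 : R[i]) ^+ d x) \is unitarymx.
Proof.
apply/unitarymxP/matrixP => i j.
rewrite mul_diag_mx !mxE.
case: (eqVneq i j) => [<-|Hij].
  rewrite /= mulr1n; case: (d i); rewrite ?expr0 ?expr1 ?rmorphN ?rmorph1 ?mulrNN ?mulr1 //.
by rewrite /= mulr0n rmorph0 mulr0.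
Qed.

Lemma restr_bit n (S : {set 'I_n}) (x : nat) (j : 'I_n) : j \in S ->
  bit (restr S x) (index j (enum S)) = bit x j.
Proof.
move=> jS.
have Hi : (index j (enum S) < #|S|)%N by rewrite cardE index_mem mem_enum.
rewrite /restr /= /restr_nat.
have Hlt := binsum_lt (fun i => bit x (nth 0%N [seq val j | j <- enum S] i)) #|S|.
rewrite modn_small //.
rewrite (binsum_bit (fun i => bit x (nth 0%N [seq val j | j <- enum S] i))) //.
by rewrite (nth_map j) ?nth_index ?mem_enum // -?cardE.
Qed.

Lemma junta_q (R : realType) n k (f : 'I_(2 ^ n) -> bool) :
  (k <= n)%N -> cjunta k f -> qjunta k (Uf R f).
Proof.
move=> kn [idx [g Hf]].
have [S [HS HSk]] := @extend_set _ [set idx m | m in 'I_k] k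
   (leq_trans (leq_imset_card _ _) (eq_leq (card_ord k))) ltac:(by rewrite card_ord).
exists S, (diag_mx (\row_a (-1 : R[i]) ^+ (g [ffun m => bit a (index (idx m) (enum S))]))).
split; first done; split; first exact: diag_unitary.
apply/matrixP => x y; rewrite !mxE.
case: (eqVneq x y) => [<-|Hxy].
  have -> : [forall j, (j \notin S) ==> (bit x j == bit x j)].
    by apply/forallP => j; apply/implyP => _.
  rewrite eqxx /= Hf; congr (_ ^+ g _ *+ _).
  apply/ffunP => m; rewrite !ffunE restr_bit //.
  by apply: (subsetP HS); apply: imset_f.
rewrite mulr0n; case: ifP => // Hall.
have -> : (restr S x == restr S y) = false.
  apply/negbTE/eqP => E; move/eqP: Hxy; apply; apply: val_inj.
  apply: (@bits_inj n); [exact: ltn_ord | exact: ltn_ord | move=> j Hj].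
  have [jS|jS] := boolP (Ordinal Hj \in S).
    by rewrite -(restr_bit _ _ x _ jS) -(restr_bit _ _ y _ jS) E.
  by have := forallP Hall (Ordinal Hj); rewrite jS /= => /eqP.
by rewrite mulr0n.
Qed.

Section KeyS.
Local Open Scope complex_scope.
Lemma key (R : realType) (c s a b : R) (bb : bool) :
  c ^+ 2 + s ^+ 2 = 1 ->
  (bb != (c * a + s * b < 0)) ->
  1 <= Normc.normc ((c +i* s) * (-1) ^+ bb - (a +i* b)) ^+ 2.
Proof.
move=> H1 H2.
case: (ltrP (c * a + s * b) 0) H2; case: bb => //= H3 _;
  rewrite sqr_sqrtr ?addr_ge0 ?sqr_ge0 //; nra.
Qed.
End KeyS.

Lemma far_q (R : realType) n k (f : 'I_(2 ^ n) -> bool) (e : R) :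
  cfar k f e -> qfar k (Uf R f) (Num.sqrt (e / 2)).
Proof.
move=> Hf V [S [V' [HSk [_ ->]]]] t _ _.
subst k.
pose h (a : 'I_(2 ^ #|S|)) : bool :=
  cos t * complex.Re (V' a a) + sin t * complex.Im (V' a a) < 0.
pose g (x : 'I_(2 ^ n)) := h (restr S x).
have gj : cjunta #|S| g.
  exists (fun m => enum_val m),
    (fun b : {ffun 'I_#|S| -> bool} => h (Ordinal (ltn_pmod (\sum_(i < #|S|) b i * 2 ^ i) (pow2_gt0 #|S|)))).
  move=> x; rewrite /g; congr h; apply: val_inj => /=; congr (modn _ _).
  rewrite /restr_nat; apply: eq_bigr => i _; rewrite ffunE.
  have Hi : (i < size (enum S))%N by rewrite -cardE.
  by rewrite (nth_map (enum_val i)) // -enum_val_nth.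
have He := Hf g gj; rewrite /cdist in He.
set M := expi t *: Uf R f - tens_on V'.
have Hsum : (#|[set x | f x != g x]|%:R : R) <=
    \sum_(i < 2 ^ n) \sum_(j < 2 ^ n) Normc.normc (M i j) ^+ 2.
  rewrite -sum1_card big_mkcond natr_sum /=.
  apply: ler_sum => i _.
  apply: (@le_trans _ _ (Normc.normc (M i i) ^+ 2)).
    rewrite inE; case E: (f i != g i); last by rewrite sqr_ge0.
    rewrite /M !mxE eqxx /= mulr1n.
    have -> : [forall j, (j \notin S) ==> (bit i j == bit i j)].
      by apply/forallP => j; apply/implyP => _.
    move: E; rewrite /g /h.
    case: (V' (restr S i) (restr S i)) => a b /= E.
    apply: key => //; exact: cos2Dsin2.
  rewrite (bigD1 i) //= lerDl; apply: sumr_ge0 => j _; exact: sqr_ge0.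
rewrite /frob.
move: He Hsum.
set c := (#|_|%:R : R); set Sg := \sum_(i < 2 ^ n) _; set N := ((2 ^ n)%:R : R).
move=> He Hsum.
have NP : 0 < N by rewrite /N ltr0n expn_gt0.
have SP : 0 <= Sg by apply: sumr_ge0 => i _; apply: sumr_ge0 => j _; exact: sqr_ge0.
rewrite -sqrtrV ?mulr_ge0 ?ler0n ?(ltW NP) // -sqrtrM ?invr_ge0 ?mulr_ge0 ?ler0n ?(ltW NP) //.
rewrite ler_sqrt ?mulr_ge0 ?invr_ge0 ?mulr_ge0 ?ler0n ?(ltW NP) //.
have H1 : e * N <= c by rewrite -ler_pdivlMr.
have -> : (2 * N)^-1 * Sg = (Sg / N) / 2 by field; apply: lt0r_neq0.
rewrite ler_pM2r ?invr_gt0 ?ltr0n // ler_pdivlMr //; lra.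
Qed.

Theorem mainTheorem2 (R : realType) (n k T : nat) (e : R) (A : qalg R n T) :
  (1 <= k)%N -> (k <= n)%N -> 0 < e -> qalg_wf A ->
  qtester k A (Num.sqrt (e / 2)) ->
  ctester k A e.
Proof.
move=> _ kn _ _ Hq f.
have HU : Uf R f \is unitarymx := @diag_unitary R _ f.
have [H1 H2] := Hq _ HU.
split => H.
  exact: H1 (junta_q R n k f kn H).
exact: H2 (far_q R n k f e H).
Qed.
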